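(* Starting from the freshly initialized sampling data structure (no point opened), the total running time of opening any set $S$ of $k$ points of $P$ by successive calls to MultiTreeOpen is $O(n\log(d\Delta)\log n)$.
   Context: $P\subseteq\mathbb{R}^d$ has $n$ points, $\Delta$ is the ratio of maximum to minimum distance between distinct points of $P$. Tree embedding: compute $\mathrm{MaxDist}$, an upper bound on the maximum pairwise distance within factor $2$ of it; add a uniformly random shift $s\in[0,\mathrm{MaxDist}]$ to each coordinate of all points; the root (height $0$) is the axis-aligned cube of side $2\,\mathrm{MaxDist}$ centered at an input point; recursively each node cube of side $L$ at height $i$ is split into $2^d$ subcubes of side $L/2$, nonempty ones become children connected by edges of weight $\sqrt d\,\mathrm{MaxDist}/2^i$, until each cube has at most one point (all leaves at height $H=O(\log(d\Delta))$). $\mathrm{TreeDist}_T$ is the shortest-path distance in tree $T$. The multi-tree embedding consists of three such trees with independent shifts; $\mathrm{MultiTreeDist}$ is the minimum of the three tree distances, $\mathrm{MultiTreeDist}(x,\emptyset)^2=M:=16d\,\mathrm{MaxDist}^2$. Sampling data structure: weights $w_x$ for $x\in P$, initially $M$; a balanced binary ''sample-tree'' with one leaf per point of $P$, each node's weight being the sum of $w_x$ over leaves in its subtree; a mark bit, initially unmarked, for every node of each of the three trees; and for each tree $T$ and node $v$ the set $P_T(v)\subseteq P$ of points in $v$'s subtree. MultiTreeOpen$(x)$: for each of the three trees $T$: let $v_0$ be the leaf of $T$ containing $x$; traverse towards the root forming a path $v_0,v_1,\dots,v_\ell$ until $v_\ell$ is the root or the parent of $v_\ell$ is marked; mark $v_0,\dots,v_\ell$;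 for each $y\in P_T(v_\ell)$, if $\mathrm{TreeDist}_T(y,x)^2<w_y$ then set $w_y\leftarrow\mathrm{TreeDist}_T(y,x)^2$ and traverse the sample-tree from $y$'s leaf to the root updating node weights depending on $w_y$. *)

(* Defs.v *)
From HB Require Import structures.
From mathcomp Require Import all_boot all_order all_algebra.
From mathcomp Require Import reals exp.
Set Implicit Arguments. Unset Strict Implicit. Unset Printing Implicit Defensive.
Import Order.TTheory GRing.Theory Num.Theory.
Local Open Scope ring_scope.

Section MultiTree.
Variables (R : realType) (d n : nat).

(** Points of R^d; the input set P is given as an (injective) indexing
    [P : 'I_n -> point]. *)
Definition point := 'I_d -> R.

Definition edist (x y : point) : R := Num.sqrt (\sum_(j < d) (x j - y j) ^+ 2).

Variable P : 'I_n -> point.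

Definition maxdist : R :=
  \big[Num.max/0]_(i < n) \big[Num.max/0]_(j < n) edist (P i) (P j).

Definition mindist : R :=
  \big[Num.min/maxdist]_(i < n) \big[Num.min/maxdist]_(j < n | j != i)
     edist (P i) (P j).

Definition aspect : R := maxdist / mindist.

Variable MD : R.

(** A tree of the multi-tree embedding is given by its shift vector [s]
    (added to every point) and the index [c] of the input point at whose
    shifted position the root cube (side 2 MD) is centered.
    The cube of height i containing point x is identified by its integer
    label: coordinate j is the index of the half-open slab of width
    2 MD / 2^i (counted from the root cube's lower corner), capped at
    2^i - 1 so that the upper boundary face belongs to the last cube. *)
Definition cell (s : point) (c : 'I_n) (i : nat) (x : 'I_n) : {ffun 'I_d -> int} :=
  [ffun j => Order.min
      (Num.floor (((P x j + s j) - (P c j + s j - MD)) / (2 * MD / 2 ^+ i)))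
      ((2 ^ i)%N - 1)%:Z].

Definition separated (s : point) (c : 'I_n) (i : nat) : bool :=
  [forall x : 'I_n, forall y : 'I_n, (x != y) ==> (cell s c i x != cell s c i y)].

Definition is_tree_height (s : point) (c : 'I_n) (H : nat) : Prop :=
  separated s c H /\ (forall h : nat, (h < H)%N -> ~~ separated s c h).

(** Tree distance between the leaves of x and y: the lowest common ancestor
    is at the largest height h at which x,y share a cube; the path goes
    through edges of weight sqrt d MD / 2^i for i = h..H-1, on both sides. *)
Definition lca_height (s : point) (c : 'I_n) (H : nat) (x y : 'I_n) : nat :=
  \max_(i < H.+1 | cell s c i x == cell s c i y) i.

Definition tree_dist (s : point) (c : 'I_n) (H : nat) (x y : 'I_n) : R :=
  if x == y then 0 else
  2 * \sum_(lca_height s c H x y <= i < H) (Num.sqrt d%:R * MD / 2 ^+ i).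

Definition Minit : R := 16 * d%:R * MD ^+ 2.

(** Tree nodes are (height, cube label); marks of tree t: [marks t h lab]. *)
Definition marks_t := 'I_3 -> nat -> {ffun 'I_d -> int} -> bool.
Definition state := (marks_t * ('I_n -> R))%type.

Definition init_state : state := (fun _ _ _ => false, fun _ => Minit).

(** Depth of the balanced binary sample-tree with n leaves. *)
Definition sample_depth : nat := up_log 2 n.

Variables (s : 'I_3 -> point) (c : 'I_3 -> 'I_n) (H : 'I_3 -> nat).

(** Height g of v_l: walking up from the leaf (height H) the first node that
    is the root or whose parent is marked, i.e. the largest such height. *)
Definition top_height (m : marks_t) (t : 'I_3) (x : 'I_n) : nat :=
  \max_(i < (H t).+1 | (i == 0%N :> nat) || m t i.-1 (cell (s t) (c t) i.-1 x)) i.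

(** Cost = (l+1) nodes traversed and marked
         + |P_T(v_l)| points scanned
         + (number of weight updates) * (sample-tree depth + 1). *)
Definition tree_open (t : 'I_3) (x : 'I_n) (st : state) : state * nat :=
  let: (m, w) := st in
  let g := top_height m t x in
  let inP y := cell (s t) (c t) g y == cell (s t) (c t) g x in
  let td2 y := tree_dist (s t) (c t) (H t) y x ^+ 2 in
  let upd y := inP y && (td2 y < w y) in
  let m' := fun t' h lab =>
     m t' h lab || [&& t' == t, (g <= h <= H t)%N & lab == cell (s t) (c t) h x] in
  let w' := fun y => if upd y then td2 y else w y in
  let cost := ((H t - g).+1 + #|[pred y | inP y]|
               + #|[pred y | upd y]| * sample_depth.+1)%N in
  ((m', w'), cost).

Definition multi_open (x : 'I_n) (st : state) : state * nat :=
  foldl (fun acc t => let: (st1, k) := acc in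
                      let: (st2, k2) := tree_open t x st1 in (st2, (k + k2)%N))
        (st, 0%N) (enum 'I_3).

Fixpoint run_cost (S : seq 'I_n) (st : state) : nat :=
  match S with
  | [::] => 0%N
  | x :: S' => let: (st', k) := multi_open x st in (k + run_cost S' st')%N
  end.

End MultiTree.

Definition log2 {R : realType} (x : R) : R := ln x / ln 2.

(* Main.v *)
Require Import Defs.
From HB Require Import structures.
From mathcomp Require Import all_boot all_order all_algebra.
From mathcomp Require Import reals exp.
From mathcomp Require Import zify.
Import Order.TTheory GRing.Theory Num.Theory.
From mathcomp Require Import boolp ring lra.

Lemma sum_itv k a b : b <= k -> \sum_(h < k) ((a <= h) && (h < b) : nat) = b - a.
Proof.
elim: k b => [|k IH] b hb; first by rewrite big_ord0; lia.
rewrite big_ord_recr /=.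
case: (ltnP b k.+1) => hbk.
  by rewrite IH; [rewrite andbF addn0 | lia].
rewrite andbT.
have hb' : b = k.+1 by lia.
subst b.
rewrite (eq_bigr (fun h : 'I_k => ((a <= h) && (h < k) : nat))); last first.
  by move=> i _; rewrite (ltn_ord i) ltnS (ltnW (ltn_ord i)).
rewrite IH //. case: (leqP a k) => hak /=; lia.
Qed.

Lemma leq_b (a b : bool) : (a -> b) -> (a : nat) <= b.
Proof. by case: a; case: b => // /(_ isT). Qed.

Section Comb.
Variables (R : realType) (d n : nat) (P : 'I_n -> point R d) (MD : R)
  (s : 'I_3 -> point R d) (c : 'I_3 -> 'I_n) (H : 'I_3 -> nat).
Hypothesis sep : forall t, separated P MD (s t) (c t) (H t).

Local Notation cl t h y := (cell P MD (s t) (c t) h y).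
Definition cnt (m : marks_t d) t y := \sum_(h < (H t).+1) (m t h (cl t h y) : nat).
Definition Phi m t := \sum_(y < n) cnt m t y.
Definition Phi3 m := \sum_(t < 3) Phi m t.
Local Notation D := (sample_depth n).

Lemma step_gen t x (m m' : marks_t d) g :
  g <= H t ->
  (forall h, g <= h < H t -> m t h (cl t h x) = false) ->
  (forall t' h lab, m t' h lab -> m' t' h lab) ->
  (forall t' h lab, t' != t -> m' t' h lab = m t' h lab) ->
  (forall h, g <= h <= H t -> m' t h (cl t h x)) ->
  forall k, k <= #|[pred y | cl t g y == cl t g x]| ->
  (H t - g).+1 + #|[pred y | cl t g y == cl t g x]| + k * D.+1 + D.+2 * Phi3 m
    <= D.+2 * (Phi3 m' + 2).
Proof.
move=> gH F2 Fm Fo Fn k hk.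
have sepx : g = H t -> forall y, cl t g y == cl t g x -> y = x.
  move=> eg y /eqP hy; apply/eqP; apply: contraT => hyx.
  have := sep t; rewrite /separated => /forallP /(_ y) /forallP /(_ x).
  by rewrite hyx /= -eg hy eqxx.
have cmono : forall t' y, cnt m t' y <= cnt m' t' y.
  by move=> t' y; apply: leq_sum => h _; apply: leq_b; apply: Fm.
have cx : cnt m t x + (H t - g) <= cnt m' t x.
  rewrite -(sum_itv (H t).+1 g (H t)) // -big_split /=.
  apply: leq_sum => h _.
  case E: ((g <= h) && (h < H t)).
    by rewrite F2 // Fn //; move/andP: E => [-> /ltnW ->].
  by rewrite addn0; apply: leq_b; apply: Fm.
have cy : forall y, cl t g y == cl t g x -> g < H t -> cnt m t y + 1 <= cnt m' t y.
  move=> y /eqP hy hg.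
  have hg' : g < (H t).+1 by lia.
  rewrite /cnt (bigD1 (Ordinal hg')) // [X in _ <= X](bigD1 (Ordinal hg')) //= hy.
  rewrite F2 ?leqnn ?hg // Fn ?leqnn ?gH //.
  rewrite add0n add1n addnC ltnS; apply: leq_sum => h _.
  by apply: leq_b; apply: Fm.
set q := \sum_(y < n | y != x) ((cl t g y == cl t g x) && (g < H t) : nat).
have hPhi : Phi m t + (H t - g) + q <= Phi m' t.
  rewrite /Phi (bigD1 x) // [X in _ <= X](bigD1 x) //=.
  suff hs : \sum_(i < n | i != x) cnt m t i + q <= \sum_(i < n | i != x) cnt m' t i.
    by rewrite (addnAC (cnt m t x)) -addnA; exact: leq_add cx hs.
  rewrite /q -big_split; apply: leq_sum => y hy.
  case E: ((cl t g y == cl t g x) && (g < H t)).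
    by move/andP: E => [h1 h2]; apply: cy.
  by rewrite /= addn0; apply: cmono.
have hcard : #|[pred y | cl t g y == cl t g x]| = q.+1.
  rewrite -sum1_card big_mkcond /= (bigD1 x) //= inE eqxx add1n; congr S.
  rewrite /q; apply: eq_big => // y hy; rewrite inE.
  case: (ltnP g (H t)) => hg; first by rewrite andbT; case: (_ == _).
  have eg : g = H t by lia.
  case E: (cl t g y == cl t g x) => //.
  by move: hy; rewrite (sepx eg y E) eqxx.
have hO : forall mm : marks_t d, Phi3 mm = Phi mm t + \sum_(t' < 3 | t' != t) Phi mm t'.
  by move=> mm; rewrite /Phi3 (bigD1 t).
have hOe : \sum_(t' < 3 | t' != t) Phi m' t' = \sum_(t' < 3 | t' != t) Phi m t'.
  apply: eq_bigr => t' ht'; rewrite /Phi; apply: eq_bigr => y _.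
  by rewrite /cnt; apply: eq_bigr => h _; rewrite Fo.
rewrite !hO hOe hcard.
set O := \sum_(t' < 3 | t' != t) Phi m t'.
have hk' : k * D.+1 <= q.+1 * D.+1 by apply: leq_mul; rewrite -?hcard.
move: hPhi hk'; set A := Phi m t; set A' := Phi m' t; set e := H t - g.
move=> hPhi hk'.
nia.
Qed.


Lemma tree_step t x m w :
  let r := tree_open P MD s c H t x (m, w) in
  r.2 + D.+2 * Phi3 m <= D.+2 * (Phi3 r.1.1 + 2).
Proof.
rewrite /tree_open /=.
apply: step_gen.
- rewrite /top_height; apply/bigmax_leqP => i _; rewrite -ltnS; exact: ltn_ord.
- move=> h /andP[h1 h2]; apply/negbTE/negP => hm.
  have hh : h.+1 < (H t).+1 by rewrite ltnS.
  have := @leq_bigmax_cond _ (fun i : 'I_(H t).+1 => (i == 0%N :> nat) || m t i.-1 (cl t i.-1 x))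
     (fun i => nat_of_ord i) (Ordinal hh).
  rewrite /= => /(_ hm) hlt; have := leq_ltn_trans h1 hlt; by rewrite ltnn.
- by move=> t' h lab ->.
- by move=> t' h lab /negbTE ->; rewrite orbF.
- by move=> h hh; rewrite eqxx hh eqxx orbT.
- apply/subset_leq_card/subsetP => y; rewrite !inE => /andP[] //.
Qed.

Definition ostep x (acc : state R d n * nat) (t : 'I_3) :=
  let: (st1, k) := acc in let: (st2, k2) := tree_open P MD s c H t x st1 in (st2, (k + k2)%N).

Lemma foldl_cons x st k0 t ts : foldl (ostep x) (st,k0) (t::ts) =
  let: (st2,k2) := tree_open P MD s c H t x st in foldl (ostep x) (st2, (k0+k2)%N) ts.
Proof. by rewrite /= /ostep; case: (tree_open P MD s c H t x st). Qed.

Lemma fold_step x ts (st : state R d n) k0 :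
  let r := foldl (ostep x) (st, k0) ts in
  r.2 + D.+2 * Phi3 st.1 <= k0 + D.+2 * (Phi3 r.1.1 + 2 * size ts).
Proof.
elim: ts st k0 => [|t ts IH] st k0; first by rewrite /= muln0 addn0 addnC.
rewrite foldl_cons.
case: st => m w.
case E: (tree_open P MD s c H t x (m, w)) => [st2 k2].
have := tree_step t x m w; rewrite E /= => h1.
have := IH st2 (k0 + k2).
move: (foldl (ostep x) (st2, (k0 + k2)%N) ts) => r /= h2.
nia.
Qed.

Lemma multi_step x (st : state R d n) :
  let r := multi_open P MD s c H x st in
  r.2 + D.+2 * Phi3 st.1 <= D.+2 * (Phi3 r.1.1 + 6).
Proof.
have := fold_step x (enum 'I_3) st 0.
by rewrite size_enum_ord.
Qed.

Lemma Phi3_le (m : marks_t d) : Phi3 m <= \sum_(t < 3) n * (H t).+1.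
Proof.
apply: leq_sum => t _.
rewrite /Phi -[n in n * _]card_ord -sum_nat_const.
apply: leq_sum => y _.
rewrite /cnt -[X in _ <= X]card_ord -sum1_card.
by apply: leq_sum => h _; case: (m _ _ _).
Qed.

Lemma run_step S (st : state R d n) :
  run_cost P MD s c H S st + D.+2 * Phi3 st.1
    <= D.+2 * (\sum_(t < 3) n * (H t).+1 + 6 * size S).
Proof.
elim: S st => [|x S IH] st /=.
  by rewrite add0n muln0 addn0 leq_mul2l Phi3_le orbT.
case E: (multi_open P MD s c H x st) => [st' k].
have := multi_step x st; rewrite E /= => h1.
have := IH st' => h2.
move: h1 h2; move: (run_cost P MD s c H S st') (\sum_(t < 3) n * (H t).+1) (Phi3 st.1) (Phi3 st'.1) (D.+2)
=> A B X Y E2 h1 h2. nia.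
Qed.

End Comb.
Local Open Scope ring_scope.
Section Geo.
Variables (R : realType) (d n : nat) (P : 'I_n -> point R d).
Hypothesis Pinj : injective P.

Lemma edist_ge0 (x y : point R d) : 0 <= edist x y.
Proof. exact: sqrtr_ge0. Qed.

Lemma edist_sqr (x y : point R d) : edist x y ^+ 2 = \sum_(j < d) (x j - y j) ^+ 2.
Proof. by rewrite /edist sqr_sqrtr // sumr_ge0 // => j _; exact: sqr_ge0. Qed.

Lemma coord_le_edist (x y : point R d) j : `|x j - y j| <= edist x y.
Proof.
have h1 : (x j - y j) ^+ 2 <= edist x y ^+ 2.
  rewrite edist_sqr (bigD1 j) //= lerDl sumr_ge0 // => k _; exact: sqr_ge0.
have h0 := edist_ge0 x y.
rewrite ler_norml; apply/andP; split; nra.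
Qed.

Lemma edist_gt0 x y : x != y -> 0 < edist (P x) (P y).
Proof.
move=> hxy; rewrite lt_neqAle edist_ge0 andbT; apply/negP => /eqP h0.
have hs : \sum_(j < d) (P x j - P y j) ^+ 2 = 0 by rewrite -edist_sqr -h0 expr0n.
have hall : forall j, P x j = P y j.
  move=> j; have /psumr_eq0P := hs => /(_ (fun k _ => sqr_ge0 _) j isT).
  by move/eqP; rewrite sqrf_eq0 subr_eq0 => /eqP.
by move: hxy; rewrite (Pinj _ _ (funext hall)) eqxx.
Qed.

Lemma le_maxdist i j : edist (P i) (P j) <= maxdist P.
Proof.
rewrite /maxdist.
have h1 : edist (P i) (P j) <= \big[Num.max/0]_(j0 < n) edist (P i) (P j0) by exact: le_bigmax.
apply: (le_trans h1); exact: (le_bigmax _ (fun i0 => \big[Num.max/0]_(j0 < n) edist (P i0) (P j0)) i).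
Qed.

Lemma mindist_le i j : i != j -> mindist P <= edist (P i) (P j).
Proof.
move=> hij; rewrite /mindist.
apply: (le_trans (bigmin_le _ i (fun i0 => \big[Num.min/maxdist P]_(j0 < n | j0 != i0) edist (P i0) (P j0)))).
by apply: (bigmin_le_cond _ (fun j => edist (P i) (P j))); rewrite eq_sym.
Qed.

Lemma mindist_le_max : mindist P <= maxdist P.
Proof. exact: bigmin_le_id. Qed.

Hypothesis n1 : (1 < n)%N.

Lemma maxdist_gt0 : 0 < maxdist P.
Proof.
have h : (@Ordinal n 0 (ltnW n1)) != (Ordinal n1) by [].
exact: (lt_le_trans (edist_gt0 _ _ h) (le_maxdist _ _)).
Qed.

Lemma mindist_gt0 : 0 < mindist P.
Proof.
rewrite /mindist; apply: lt_bigmin => [|i _]; first exact: maxdist_gt0.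
apply: lt_bigmin => [|j hj]; first exact: maxdist_gt0.
by apply: edist_gt0; rewrite eq_sym.
Qed.

Lemma d_gt0 : (0 < d)%N.
Proof.
have h : (@Ordinal n 0 (ltnW n1)) != (Ordinal n1) by [].
have := edist_gt0 _ _ h; rewrite /edist.
case: d P => [|d'] // Q; by rewrite big_ord0 sqrtr0 ltxx.
Qed.


Lemma cap_itv (N : nat) (z : R) : (0 < N)%N -> 0 <= z <= N%:R ->
  let v := Order.min (Num.floor z) ((N - 1)%N)%:Z in
  (v%:~R <= z) && (z <= v%:~R + 1).
Proof.
move=> N0 /andP[z0 zN] /=.
case: (leP (Num.floor z) ((N - 1)%N)%:Z) => hf.
  have := floor_itv z; rewrite intrD => /andP[h1 h2].
  by rewrite h1 /= ltW.
have e : (((N - 1)%N)%:Z)%:~R = (N%:R - 1 : R) by rewrite -pmulrn natrB.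
rewrite e; apply/andP; split; last by lra.
have : (((N - 1)%N)%:Z <= Num.floor z)%O by exact: ltW.
rewrite floor_ge_int e => h; exact: h.
Qed.

Lemma u_range (a pc sj MD L N : R) : `|a - pc| <= MD -> 0 < L -> L * N = 2 * MD ->
  0 <= (a + sj - (pc + sj - MD)) / L <= N.
Proof.
move=> ha L0 LN.
have e : a + sj - (pc + sj - MD) = a - pc + MD by ring.
move: ha; rewrite e ler_norml => /andP[h1 h2].
rewrite divr_ge0 /=; last 2 first.
- lra.
- exact: ltW.
rewrite ler_pdivrMr // mulrC LN; lra.
Qed.

Lemma sep_at (MD : R) (s : point R d) (c : 'I_n) (h : nat) :
  maxdist P <= MD <= 2 * maxdist P ->
  8 * (d%:R * aspect P) <= 2 ^+ h ->
  separated P MD s c h.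
Proof.
move=> /andP[hM1 hM2] hT.
have M0 := maxdist_gt0; have m0 := mindist_gt0.
set M := maxdist P in hM1 hM2 M0 hT; set m := mindist P in m0 hT.
have MD0 : 0 < MD by lra.
have D1 : 1 <= d%:R :> R by rewrite ler1n d_gt0.
have T0 : 0 < 2 ^+ h :> R by exact: exprn_gt0.
set T : R := 2 ^+ h in T0 hT.
set L := 2 * MD / T.
have L0 : 0 < L by rewrite divr_gt0 // mulr_gt0.
have LT : L * T = 2 * MD by rewrite /L divfK // gt_eqF.
have TN : ((2 ^ h)%N)%:R = T by rewrite natrX.
have hmT : 8 * d%:R * M <= T * m.
  have e8 : 8 * (d%:R * (M / m)) * m = 8 * d%:R * M by field; rewrite gt_eqF.
  by rewrite -e8 ler_pM2r //; move: hT; rewrite /aspect.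
apply/forallP => x; apply/forallP => y; apply/implyP => hxy; apply/negP => /eqP hc.
have hj : forall j, `|P x j - P y j| <= L.
  move=> j; have := congr1 (fun f : {ffun 'I_d -> int} => f j) hc; rewrite !ffunE -/T -/L.
  have hr : forall z, 0 <= (P z j + s j - (P c j + s j - MD)) / L <= ((2 ^ h)%N)%:R.
    move=> z; apply: u_range => //; last by rewrite TN.
    apply: le_trans (coord_le_edist _ _ j) _.
    by apply: le_trans (le_maxdist z c) _.
  have e2 : (0 < 2 ^ h)%N by rewrite expn_gt0.
  have := cap_itv _ _ e2 (hr x).
  have := cap_itv _ _ e2 (hr y).
  move=> /= /andP[hy1 hy2] /andP[hx1 hx2] hv.
  rewrite hv in hx1 hx2.
  set ux := (P x j + s j - (P c j + s j - MD)) / L in hx1 hx2.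
  set uy := (P y j + s j - (P c j + s j - MD)) / L in hy1 hy2.
  have ea : P x j - P y j = (ux - uy) * L.
    by rewrite /ux /uy -mulrBl divfK ?gt_eqF //; ring.
  rewrite ea ler_norml; apply/andP; split; nra.
have hs : edist (P x) (P y) ^+ 2 <= d%:R * L ^+ 2.
  rewrite edist_sqr.
  apply: (le_trans (ler_sum _ (fun j _ => _ : (P x j - P y j) ^+ 2 <= L ^+ 2))).
    by move=> j _; have := hj j; rewrite ler_norml => /andP[h1 h2]; nra.
  by rewrite sumr_const card_ord mulr_natl.
have hme := mindist_le _ _ hxy; rewrite -/m in hme.
have he0 := edist_ge0 (P x) (P y).
have hm2 : m ^+ 2 <= d%:R * L ^+ 2 by apply: le_trans hs; nra.
have h4 : 4 * d%:R * MD <= T * m by nra.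
have h5 : (T * m) ^+ 2 <= d%:R * (2 * MD) ^+ 2.
  rewrite -LT; have hT2 : 0 <= T ^+ 2 by exact: sqr_ge0.
  nra.
have h6 : (4 * d%:R * MD) ^+ 2 <= (T * m) ^+ 2.
  have h40 : 0 <= 4 * d%:R * MD by nra.
  nra.
have hMD2 : 0 < MD ^+ 2 by exact: exprn_gt0.
have h7 : 16 * d%:R ^+ 2 * MD ^+ 2 <= 4 * d%:R * MD ^+ 2.
  have e1 : d%:R * (2 * MD) ^+ 2 = 4 * d%:R * MD ^+ 2 by ring.
  have e2 : (4 * d%:R * MD) ^+ 2 = 16 * d%:R ^+ 2 * MD ^+ 2 by ring.
  rewrite e1 in h5; rewrite e2 in h6; lra.
have h8 : 16 * d%:R * MD ^+ 2 <= 16 * d%:R ^+ 2 * MD ^+ 2 by nra.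
nra.
Qed.

End Geo.

Lemma ln2_gt0 (R : realType) : 0 < ln (2 : R).
Proof. by apply: ln_gt0; lra. Qed.

Lemma ln_pow2 (R : realType) (k : nat) : ln (2 ^+ k : R) = k%:R * ln 2.
Proof. by rewrite lnXn ?mulr_natl //; lra. Qed.

Lemma pow_log (R : realType) (X : R) : 1 <= X ->
  X <= 2 ^+ (Num.trunc (log2 X)).+1 /\ ((Num.trunc (log2 X)).+1)%:R <= log2 X + 1.
Proof.
move=> X1.
have l2 := ln2_gt0 R.
have lg0 : 0 <= log2 X by apply: divr_ge0; [exact: ln_ge0 | exact: ltW].
split; last by rewrite -natr1 lerD2r truncn_le.
have hlt := truncnS_gt (log2 X).
have hlt' : ln X < ln (2 ^+ (Num.trunc (log2 X)).+1 : R).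
  by rewrite ln_pow2 -ltr_pdivrMr.
apply: ltW; move: hlt'; rewrite ltr_ln // posrE; [lra | exact: exprn_gt0].
Qed.

Lemma upl (R : realType) (n : nat) : (1 < n)%N -> (up_log 2 n)%:R <= log2 (n%:R : R) + 1.
Proof.
move=> n1.
have l2 := ln2_gt0 R.
have D0 : (0 < up_log 2 n)%N by rewrite up_log_gt0 n1.
have h := up_log_gtn (isT : (1 < 2)%N) n1.
have hR : (2 ^+ (up_log 2 n).-1 : R) < n%:R by rewrite -natrX ltr_nat.
have hl : ln (2 ^+ (up_log 2 n).-1 : R) < ln (n%:R : R).
  have p1 : (2 ^+ (up_log 2 n).-1 : R) \in Num.pos by rewrite posrE exprn_gt0 //; lra.
  have p2 : (n%:R : R) \in Num.pos by rewrite posrE ltr0n; lia.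
  by rewrite ltr_ln.
rewrite ln_pow2 -ltr_pdivlMr // in hl.
rewrite -(prednK D0) -natr1 lerD2r /log2; exact: ltW.
Qed.

Lemma lX (R : realType) (Y : R) : 1 <= Y -> log2 (8 * Y) = 3 + log2 Y.
Proof.
move=> Y1.
have l2 := ln2_gt0 R.
have p8 : (8 : R) \in Num.pos by rewrite posrE.
have pY : Y \in Num.pos by rewrite posrE; lra.
rewrite /log2 lnM //.
have -> : (8 : R) = 2 ^+ 3 by rewrite -natrX.
by rewrite ln_pow2 mulrDl mulfK // gt_eqF.
Qed.
Lemma nat_expand (R : realType) (a b n : nat) :
  ((a.+2 * (3 * (n * b.+1) + 6 * n))%N)%:R = 3 * n%:R * ((a%:R + 2) * (b%:R + 3)) :> R.
Proof. rewrite -(addn2 a) -(addn1 b) !natrM !natrD; ring. Qed.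

Lemma final_ineq (R : realType) (a b N L1 L2 : R) :
  0 <= a -> 0 <= b -> 0 <= N -> 0 <= L1 -> 0 <= L2 ->
  a <= L2 + 1 -> b <= L1 + 4 ->
  3 * N * ((a + 2) * (b + 3)) <= 63%:R * N * (1 + L1) * (1 + L2).
Proof.
move=> a0 b0 N0 l1 l2 ha hb.
have hA : a + 2 <= 3 * (1 + L2) by lra.
have hB : b + 3 <= 7 * (1 + L1) by lra.
have hAB : (a + 2) * (b + 3) <= (3 * (1 + L2)) * (7 * (1 + L1)).
  apply: ler_pM => //; lra.
have e2 : 63%:R * N * (1 + L1) * (1 + L2) = 3 * N * ((3 * (1 + L2)) * (7 * (1 + L1))) by ring.
rewrite e2; apply: ler_wpM2l => //; lra.
Qed.
Theorem mainTheorem4 :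
  exists C : nat,
  forall (R : realType) (d n : nat) (P : 'I_n -> 'I_d -> R) (MD : R)
         (s : 'I_3 -> 'I_d -> R) (c : 'I_3 -> 'I_n) (H : 'I_3 -> nat)
         (S : seq 'I_n),
    (1 < n)%N ->
    injective P ->
    maxdist P <= MD <= 2 * maxdist P ->
    (forall t j, 0 <= s t j <= MD) ->
    (forall t, is_tree_height P MD (s t) (c t) (H t)) ->
    uniq S ->
    (run_cost P MD s c H S (init_state d n MD))%:R
      <= C%:R * n%:R * (1 + log2 (d%:R * aspect P)) * (1 + log2 (n%:R : R)).
Proof.
exists 63%N => R d n P MD s c H S n1 Pinj hMD _ hH uS.
have m0 := mindist_gt0 _ _ _ _ Pinj n1.
have asp1 : 1 <= aspect P.
  by rewrite /aspect ler_pdivlMr // mul1r mindist_le_max.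
have dR1 : 1 <= d%:R :> R by rewrite ler1n (d_gt0 _ _ _ _ Pinj n1).
set Y := d%:R * aspect P.
have Y1 : 1 <= Y by rewrite /Y; nra.
have X1 : 1 <= 8 * Y by lra.
have [hX hh0] := pow_log _ _ X1.
set h0 := (Num.trunc (log2 (8 * Y))).+1 in hX hh0.
have l2 := ln2_gt0 R.
have lXe := lX _ _ Y1.
have L1 : 0 <= log2 Y by apply: divr_ge0; [exact: ln_ge0 | exact: ltW].
have L2 : 0 <= log2 (n%:R : R).
  by apply: divr_ge0; [apply: ln_ge0; rewrite ler1n; exact: ltnW | exact: ltW].
have hD := upl R n n1.
have Hle : forall t, (H t <= h0)%N.
  move=> t; case: (hH t) => _ hmin; rewrite leqNgt; apply/negP => hlt.
  by have := hmin _ hlt; rewrite (sep_at _ _ _ _ Pinj n1 MD (s t) (c t) _ hMD hX).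
have sep : forall t, separated P MD (s t) (c t) (H t) by move=> t; case: (hH t).
have hrun := run_step _ _ _ _ _ _ _ _ sep S (init_state d n MD).
have hS : (size S <= n)%N.
  by move/card_uniqP: uS => <-; rewrite -[X in (_ <= X)%N]card_ord max_card.
have hsum : (\sum_(t < 3) n * (H t).+1 <= 3 * (n * h0.+1))%N.
  apply: leq_trans (_ : (\sum_(t < 3) n * h0.+1 <= _)%N).
    by apply: leq_sum => t _; rewrite leq_mul2l ltnS Hle orbT.
  by rewrite sum_nat_const card_ord.
set D := sample_depth n.
have hnat : (run_cost P MD s c H S (init_state d n MD) <= D.+2 * (3 * (n * h0.+1) + 6 * n))%N.
  apply: leq_trans (leq_addr _ _) _; apply: leq_trans hrun _.
  apply: leq_mul => //; apply: leq_add => //; by rewrite leq_mul2l hS orbT.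
have hR : (run_cost P MD s c H S (init_state d n MD))%:R <= ((D.+2 * (3 * (n * h0.+1) + 6 * n))%N)%:R :> R.
  by rewrite ler_nat; exact: hnat.
apply: (le_trans hR).
rewrite nat_expand.
have hh0' : h0%:R <= log2 Y + 4.
  by apply: (le_trans hh0); rewrite lXe le_eqVlt; apply/orP; left; apply/eqP; ring.
apply: final_ineq => //; rewrite ?ler0n //.
Qed.
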